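(* Let $f\colon\mathbb R\to\mathbb R$ be continuous and suppose there are $a>0$ and $b\in\mathbb R$ with $|f(x)|\leqslant a\cosh(bx)$ for all $x$. Fix $\lambda>0$, let $P_n = e^{-\lambda}\lambda^n/n!$, and for $k\geqslant1$ let $h_k\colon y\mapsto f(y)/k$. For a compactly supported Borel probability measure $\rho$ on $\mathbb R$ and $x\in\mathbb R$ define the probability measures $$\sigma^{f,\rho}_x = \sum_{n=0}^\infty P_n\,(h_{n+1})_\star\big(\delta_x*\rho^{*n}\big),\qquad \sigma^{f,\rho} = \sum_{n=0}^\infty P_n\,(h_{n+1})_\star\big(\rho^{*(n+1)}\big),$$ where $(h_k)_\star$ is pushforward, $*$ is convolution and $\rho^{*0}=\delta_0$. Then for every compactly supported probability measure $\rho$ and every $x\in\mathbb R$, the expectations $\langle\sigma^{f,\rho}_x, y\rangle$ and $\langle\sigma^{f,\rho},y\rangle$ are finite; equivalently, $$\sum_{n=0}^\infty \frac{e^{-\lambda}\lambda^n}{(n+1)!}\big|\langle\delta_x*\rho^{*n}, f\rangle\big|<\infty \quad\text{and}\quad \sum_{n=0}^\infty \frac{e^{-\lambda}\lambda^n}{(n+1)!}\big|\langle\rho^{*(n+1)}, f\rangle\big|<\infty.$$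
   Context: $\langle\tau,\phi\rangle=\int\phi\,d\tau$; $\delta_a$ is the Dirac measure at $a$; $\cosh$ is the hyperbolic cosine. Here $\langle\sigma,y\rangle$ denotes the mean $\int y\,d\sigma(y)$. *)

(* Defs.v *)
From HB Require Import structures.
From mathcomp Require Import all_boot all_order all_algebra.
From mathcomp Require Import all_classical all_reals all_analysis.
Set Implicit Arguments. Unset Strict Implicit. Unset Printing Implicit Defensive.
Import Order.TTheory GRing.Theory Num.Theory.
Import numFieldNormedType.Exports.
Local Open Scope classical_set_scope.
Local Open Scope ring_scope.

Section defs.
Context {R : realType}.

Definition coshR (x : R) : R := (expR x + expR (- x)) / 2.

Definition poisson_w (lam : R) (n : nat) : R :=
  expR (- lam) * lam ^+ n / (n`!)%:R.

Definition hk (f : R -> R) (k : nat) : R -> R := fun y => f y / k%:R.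

Definition delta (a : R) : set R -> \bar R := @dirac _ R a R.

Definition mconv (mu nu : set R -> \bar R) : set R -> \bar R :=
  pushforward (mu \x nu)%E (fun p : R * R => p.1 + p.2).

Fixpoint conv_pow (rho : set R -> \bar R) (n : nat) : set R -> \bar R :=
  match n with
  | O => delta 0
  | S m => mconv (conv_pow rho m) rho
  end.

Definition sigma_x (lam : R) (f : R -> R) (rho : set R -> \bar R) (x : R)
  : set R -> \bar R :=
  fun A => (\sum_(0 <= n <oo)
    (poisson_w lam n)%:E *
      pushforward (mconv (delta x) (conv_pow rho n)) (hk f n.+1) A)%E.

Definition sigma_f (lam : R) (f : R -> R) (rho : set R -> \bar R)
  : set R -> \bar R :=
  fun A => (\sum_(0 <= n <oo)
    (poisson_w lam n)%:E * pushforward (conv_pow rho n.+1) (hk f n.+1) A)%E.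

Definition compactly_supported (rho : set R -> \bar R) : Prop :=
  exists K : set R, compact K /\ rho (~` K) = 0%E.

End defs.

(* Main.v *)
Require Import Defs.
From HB Require Import structures.
From mathcomp Require Import all_boot all_order all_algebra.
From mathcomp Require Import all_classical all_reals all_analysis.
From mathcomp Require Import measurable_realfun.
From mathcomp Require Import ring lra.
Import Order.TTheory GRing.Theory Num.Theory.
Import numFieldNormedType.Exports.
Local Open Scope classical_set_scope.
Local Open Scope ring_scope.

Definition pushm d (T : measurableType d) (R : realType)
  (M : set T -> \bar R) (h : T -> R) (hm : measurable_fun setT h) :=
  pushforward M h.
Arguments pushm {d T R}.

Section pushm.
Local Open Scope ereal_scope.
Context d (T : measurableType d) (R : realType).
Variables (M : {measure set T -> \bar R}) (h : T -> R) (hm : measurable_fun setT h).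
Local Notation pushm := (pushm M h hm).

Let pushm0 : pushm set0 = 0.
Proof. by rewrite /pushm /pushforward preimage_set0 measure0. Qed.

Let pushm_ge0 A : 0 <= pushm A.
Proof. exact: measure_ge0. Qed.

Let pushm_sa : semi_sigma_additive pushm.
Proof.
move=> F mF tF mUF; rewrite /pushm /pushforward preimage_bigcup.
apply: measure_semi_sigma_additive.
- by move=> n; rewrite -[X in measurable X]setTI; exact: hm.
- apply/trivIsetP => /= i j _ _ ij; rewrite -preimage_setI.
  by move/trivIsetP : tF => /(_ _ _ _ _ ij) ->//; rewrite preimage_set0.
- by rewrite -preimage_bigcup -[X in measurable X]setTI; exact: hm.
Qed.

HB.instance Definition _ := isMeasure.Build _ _ _ pushm pushm0 pushm_ge0 pushm_sa.
End pushm.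

Section conv.
Local Open Scope ereal_scope.
Context (R : realType).

Definition addRR (p : R * R) : R := (p.1 + p.2)%R.

Lemma measurable_addRR : measurable_fun setT addRR.
Proof. exact: measurable_funD. Qed.

Section convp.
Variables (M N : probability R R).
Definition convp : set R -> \bar R := pushm (M \x N)%E addRR measurable_addRR.
HB.instance Definition _ := Measure.on convp.
Let convp_setT : convp setT = 1.
Proof.
rewrite /convp /pushm /pushforward preimage_setT -setXTT product_measure1E //.
move: (probability_setT M) (probability_setT N) => /= -> ->.
by rewrite mule1.
Qed.
HB.instance Definition _ := Measure_isProbability.Build _ _ _ convp convp_setT.
End convp.

Fixpoint cpow (rho : probability R R) (n : nat) : probability R R :=
  match n with
  | O => \d_(0%R : R)
  | S m => convp (cpow rho m) rho
  end.

Lemma conv_powE (rho : probability R R) n :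
  conv_pow rho n = cpow rho n :> (set R -> \bar R).
Proof. by elim: n => [//|n IH] /=; rewrite IH. Qed.

Lemma mconvE (M N : probability R R) : mconv M N = convp M N.
Proof. by []. Qed.

End conv.
Arguments convp {R}.
Arguments addRR {R}.
Arguments measurable_addRR {R}.
Arguments cpow {R}.

Section support.
Local Open Scope ereal_scope.
Context {R : realType}.

Definition Ib (r : R) : set R := [set y | (`|y| <= r)%R].

Lemma IbE r : Ib r = `[(- r)%R, r]%classic.
Proof. rewrite predeqE => y; rewrite /Ib /= in_itv /= ler_norml; exact: iff_refl. Qed.

Lemma measurable_Ib r : measurable (Ib r).
Proof. by rewrite IbE; exact: measurable_itv. Qed.

Lemma measurable_nIb r : measurable (~` Ib r).
Proof. apply: measurableC; exact: measurable_Ib. Qed.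

Lemma dirac_supp (x : R) : (\d_x : probability R R) (~` Ib `|x|) = 0.
Proof.
apply: (eq_trans (diracE _ _ _)).
rewrite (_ : (x \in ~` Ib `|x|) = false) //.
by apply/negP => /set_mem /=; apply; exact: lexx.
Qed.

Lemma conv_supp (M N : probability R R) r s :
  M (~` Ib r) = 0 -> N (~` Ib s) = 0 -> convp M N (~` Ib (r + s)%R) = 0.
Proof.
move=> Mr Ns; apply/eqP; rewrite eq_le measure_ge0 andbT.
have sub : addRR @^-1` (~` Ib (r + s)%R) `<=`
    (~` Ib r) `*` setT `|` setT `*` (~` Ib s).
  move=> [p q] /= H.
  case: (pselect (Ib r p)) => Hp; last by left.
  case: (pselect (Ib s q)) => Hq; last by right.
  exfalso; apply: H; rewrite /Ib /addRR /=.
  by rewrite (le_trans (ler_normD _ _))// lerD.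
have m1 : measurable ((~` Ib r) `*` [set: R]) by apply: measurableX => //; exact: measurable_nIb.
have m2 : measurable ([set: R] `*` (~` Ib s)) by apply: measurableX => //; exact: measurable_nIb.
rewrite /convp /pushm /pushforward.
apply: (le_trans (le_measure _ _ _ sub)).
- rewrite inE; rewrite -[X in measurable X]setTI; apply: measurable_addRR => //.
  exact: measurable_nIb.
- by rewrite inE; exact: measurableU.
apply: (le_trans (measureU2 _ m1 m2)).
have E1 : ((M \x N)%E (~` Ib r `*` setT) = M (~` Ib r) * N setT) :=
  product_measure1E _ _ (measurable_nIb r) measurableT.
have E2 : ((M \x N)%E (setT `*` ~` Ib s) = M setT * N (~` Ib s)) :=
  product_measure1E _ _ measurableT (measurable_nIb s).
have H1 : (M \x N)%E (~` Ib r `*` setT) = 0 by rewrite E1 Mr mul0e.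
have H2 : (M \x N)%E (setT `*` ~` Ib s) = 0 by rewrite E2 Ns mule0.
apply: (le_trans (_ : _ <= 0 + 0)); last by rewrite adde0.
by apply: leeD; [rewrite -[leRHS]H1 | rewrite -[leRHS]H2]; exact: lexx.
Qed.

Lemma cpow_supp (rho : probability R R) K n :
  rho (~` Ib K) = 0 -> cpow rho n (~` Ib (n%:R * K)%R) = 0.
Proof.
move=> rK; elim: n => [|n IH] /=.
  rewrite mul0r; apply: (eq_trans (diracE _ _ _)).
  rewrite (_ : (0%R \in ~` Ib 0%R) = false) //.
  by apply/negP => /set_mem /=; apply; rewrite /Ib /= normr0; exact: lexx.
by rewrite -addn1 natrD mulrDl mul1r; exact: conv_supp.
Qed.

End support.
Arguments Ib {R}.

Section bounds.
Local Open Scope ereal_scope.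
Context {R : realType}.

Lemma int_bound (M : probability R R) (r C : R) (g : R -> \bar R) :
  measurable_fun setT g -> (forall y, 0 <= g y) ->
  (forall y, (`|y| <= r)%R -> g y <= C%:E) -> (0 <= C)%R ->
  M (~` Ib r) = 0 -> \int[M]_y g y <= C%:E.
Proof.
move=> mg g0 gC C0 Mr.
apply: (@le_trans _ _ (\int[M]_y (cst C%:E) y)).
  apply: ae_ge0_le_integral.
  - exact: measurableT.
  - by move=> y _.
  - exact: mg.
  - by move=> y _; rewrite lee_fin.
  - exact: measurable_cst.
  - exists (~` Ib r); split => //; first exact: measurable_nIb.
    by move=> y /= Hn Hy; apply: Hn => _; exact: gC.
rewrite integral_cst //.
move: (probability_setT M) => /= ->.
by rewrite mule1.
Qed.

Lemma coshR_le (t : R) : (coshR t <= expR `|t|)%R.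
Proof.
have h1 : (expR t <= expR `|t|)%R by rewrite ler_expR ler_norm.
have h2 : (expR (- t) <= expR `|t|)%R by rewrite ler_expR -normrN ler_norm.
rewrite /coshR; lra.
Qed.

Lemma exp_series_fin (q : R) :
  \sum_(0 <= n <oo) ((q ^+ n / n`!%:R)%R%:E) < +oo.
Proof.
have cv := is_cvg_series_exp_coeff q.
rewrite (_ : \sum_(0 <= n <oo) _ = limn (EFin \o series (exp_coeff q))).
  by rewrite EFin_lim // ltry.
by congr (limn _); apply/funext => n; rewrite /series /= sumEFin.
Qed.

Lemma sum_fin (lam a B c K : R) : (0 <= lam)%R -> (0 <= a)%R -> (0 <= B)%R ->
  \sum_(0 <= n <oo)
    ((expR (- lam) * lam ^+ n / n`!%:R) * (a * expR (B * (c + n%:R * K))))%R%:E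
  < +oo.
Proof.
move=> l0 a0 B0.
set C := (expR (- lam) * a * expR (B * c))%R.
set q := (lam * expR (B * K))%R.
have C0 : (0 <= C)%R by rewrite /C !mulr_ge0 // expR_ge0.
have q0 : (0 <= q)%R by rewrite /q mulr_ge0 // expR_ge0.
have Heq n : ((expR (- lam) * lam ^+ n / n`!%:R) * (a * expR (B * (c + n%:R * K))))%R%:E
   = C%:E * ((q ^+ n / n`!%:R)%R%:E).
  rewrite -EFinM; congr EFin.
  rewrite mulrDr expRD (mulrCA B (n%:R) K) expRM_natl /C /q exprMn; field.
  by rewrite pnatr_eq0 -lt0n fact_gt0.
rewrite (_ : \sum_(0 <= n <oo) _ = \sum_(0 <= n <oo) (C%:E * ((q ^+ n / n`!%:R)%R%:E))); last first.
  by congr (limn _); apply/funext => N; apply: eq_bigr => n _; exact: Heq.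
rewrite nneseriesZl; last by move=> n _; rewrite lee_fin divr_ge0 // exprn_ge0.
rewrite lte_mul_pinfty // ?lee_fin //.
exact: exp_series_fin.
Qed.

End bounds.

Section generic.
Local Open Scope ereal_scope.
Context {R : realType} (f : R -> R) (a b lam : R).
Hypothesis f_cont : continuous f.
Hypothesis a0 : (0 <= a)%R.
Hypothesis f_bound : forall x, (`|f x| <= a * coshR (b * x))%R.
Hypothesis l0 : (0 <= lam)%R.

Lemma mf : measurable_fun setT f.
Proof. exact: continuous_measurable_fun. Qed.

Lemma hkm k : measurable_fun setT (hk f k).
Proof. exact: measurable_funM mf (measurable_cst _). Qed.

Lemma fb (y r : R) : (`|y| <= r)%R -> (`|f y| <= a * expR (`|b| * r))%R.
Proof.
move=> yr; apply: (le_trans (f_bound y)); apply: ler_wpM2l => //.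

apply: (le_trans (coshR_le (b * y))); rewrite ler_expR normrM.
by apply: ler_wpM2l.
Qed.

Lemma pw0 n : (0 <= poisson_w lam n)%R.
Proof. by rewrite /poisson_w !mulr_ge0 ?expR_ge0 ?exprn_ge0 ?invr_ge0. Qed.

Lemma wP n : (expR (- lam) * lam ^+ n / (n.+1)`!%:R <= poisson_w lam n)%R.
Proof.
rewrite /poisson_w ler_wpM2l ?mulr_ge0 ?expR_ge0 ?exprn_ge0 //.
rewrite lef_pV2 ?posrE ?ltr0n ?fact_gt0 // ler_nat factS leq_pmull //.
Qed.

Variables (c K : R) (Mn : nat -> probability R R).
Hypothesis K0 : (0 <= K)%R.
Hypothesis c0 : (0 <= c)%R.
Hypothesis Msupp : forall n, Mn n (~` Ib (c + n%:R * K)%R) = 0.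

Let C n := (a * expR (`|b| * (c + n%:R * K)))%R.

Lemma C0 n : (0 <= C n)%R.
Proof. by rewrite /C mulr_ge0 // expR_ge0. Qed.

Lemma intf n : \int[Mn n]_y `|(f y)%:E| <= (C n)%:E.
Proof.
apply: int_bound (Msupp n).
- apply/measurable_EFinP; exact: measurableT_comp mf.
- by [].
- by move=> y yr /=; rewrite lee_fin; exact: fb.
- exact: C0.
Qed.

Lemma inthk n : \int[Mn n]_y `|(hk f n.+1 y)%:E| <= (C n)%:E.
Proof.
apply: int_bound (Msupp n).
- apply/measurable_EFinP; exact: measurableT_comp (hkm _).
- by [].
- move=> y yr /=; rewrite lee_fin /hk normrM normfV (ger0_norm (ler0n _ _)).
  rewrite /C; apply: (le_trans _ (fb _ _ yr)); rewrite ler_piMr // invf_le1 // ?ltr0n // ler1n //.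
- exact: C0.
Qed.

Definition mun (n : nat) : {measure set R -> \bar R} :=
  mscale (NngNum (pw0 n)) (pushm (Mn n) (hk f n.+1) (hkm n.+1)).

Lemma gen_integrable : (mseries mun 0).-integrable setT (fun y => y%:E).
Proof.
apply/integrableP; split.
  by apply/measurable_EFinP; exact: measurable_id.
rewrite ge0_integral_measure_series //; last first.
  apply: measurableT_comp; [exact: abse_measurable | exact: EFin_measurable].
apply: (le_lt_trans _ (@sum_fin _ lam a `|b| c K l0 a0 (normr_ge0 b))).
apply: lee_nneseries => [n _ _|n _]; first exact: integral_ge0.
rewrite /mun ge0_integral_mscale //; last first.
  apply: measurableT_comp; [exact: abse_measurable | exact: EFin_measurable].
rewrite /pushm (ge0_integral_pushforward (hkm n.+1)) //; last first.
  apply: measurableT_comp; [exact: abse_measurable | exact: EFin_measurable].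
rewrite [leRHS]EFinM; apply: lee_pmul.
- by rewrite lee_fin; exact: pw0.
- apply: integral_ge0 => y _; exact: abse_ge0.
- exact: lexx.
- exact: (inthk n).
Qed.

Lemma gen_sum :
  \sum_(0 <= n <oo)
     (expR (- lam) * lam ^+ n / (n.+1)`!%:R)%:E *
     `| \int[Mn n]_y (f y)%:E | < +oo.
Proof.
apply: (le_lt_trans _ (@sum_fin _ lam a `|b| c K l0 a0 (normr_ge0 b))).
apply: lee_nneseries => [n _ _|n _].
  by rewrite mule_ge0 // lee_fin divr_ge0 ?mulr_ge0 ?expR_ge0 ?exprn_ge0.
rewrite [leRHS]EFinM; apply: lee_pmul => //.
- by rewrite lee_fin divr_ge0 ?mulr_ge0 ?expR_ge0 ?exprn_ge0.
- by rewrite lee_fin; exact: wP.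
apply: le_trans (intf n).
apply: le_abse_integral => //.
by apply/measurable_EFinP; exact: mf.
Qed.

End generic.

Theorem theorem4 (R : realType) (f : R -> R) (a b lam : R)
  (f_cont : continuous f) (a_pos : 0 < a)
  (f_bound : forall x, `|f x| <= a * coshR (b * x))
  (lam_pos : 0 < lam)
  (rho : probability R R) (rho_cpt : compactly_supported rho) (x : R) :
  [/\ (sigma_x lam f rho x).-integrable setT (fun y => y%:E),
      (sigma_f lam f rho).-integrable setT (fun y => y%:E),
      (\sum_(0 <= n <oo)
         (expR (- lam) * lam ^+ n / (n.+1)`!%:R)%:E *
         `| \int[mconv (delta x) (conv_pow rho n)]_y (f y)%:E |
         < +oo)%E
    & (\sum_(0 <= n <oo)
         (expR (- lam) * lam ^+ n / (n.+1)`!%:R)%:E *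
         `| \int[conv_pow rho n.+1]_y (f y)%:E | < +oo)%E].
Proof.
have a0 : 0 <= a := ltW a_pos.
have l0 : 0 <= lam := ltW lam_pos.
have [K [K0 rK]] : exists K : R, 0 <= K /\ rho (~` Ib K) = 0%E.
  case: rho_cpt => S [cS rS].
  have := compact_bounded cS.
  move=> [M0 [_ HM]].
  have hM : M0 < `|M0| + 1 by rewrite (le_lt_trans (ler_norm M0)) // ltrDl.
  exists (`|M0| + 1); split; first by rewrite addr_ge0.
  apply/eqP; rewrite eq_le measure_ge0 andbT -rS.
  apply: le_measure; rewrite ?inE.
  - exact: measurable_nIb.
  - apply: measurableC; apply: closed_measurable.
    exact: (compact_closed (@Rhausdorff R) cS).
  - move=> y /= Hy Sy; apply: Hy; exact: (HM (`|M0| + 1) hM y Sy).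
pose Mx n : probability R R := convp \d_x (cpow rho n).
pose Mf n : probability R R := cpow rho n.+1.
have sx n : Mx n (~` Ib (`|x| + n%:R * K)) = 0%E.
  exact: (conv_supp _ _ _ _ (dirac_supp x) (cpow_supp _ _ n rK)).
have sf n : Mf n (~` Ib (K + n%:R * K)) = 0%E.
  rewrite addrC; exact: (conv_supp _ _ _ _ (cpow_supp _ _ n rK) rK).
have sxE : sigma_x lam f rho x = mseries (mun f lam f_cont l0 Mx) 0.
  apply/funext => A; rewrite /sigma_x /mseries.
  congr (limn _); apply/funext => N; apply: eq_bigr => n _.
  by rewrite conv_powE.
have sfE : sigma_f lam f rho = mseries (mun f lam f_cont l0 Mf) 0.
  apply/funext => A; rewrite /sigma_f /mseries.
  congr (limn _); apply/funext => N; apply: eq_bigr => n _.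
  by rewrite conv_powE.
split.
- rewrite sxE; exact: (@gen_integrable R f a b lam f_cont a0 f_bound l0 _ _ Mx sx).
- rewrite sfE; exact: (@gen_integrable R f a b lam f_cont a0 f_bound l0 _ _ Mf sf).
- rewrite (_ : \sum_(0 <= n <oo) _ = \sum_(0 <= n <oo)
      (expR (- lam) * lam ^+ n / (n.+1)`!%:R)%:E *
         `| \int[Mx n]_y (f y)%:E |)%E; last first.
    by congr (limn _); apply/funext => N; apply: eq_bigr => n _; rewrite conv_powE.
  exact: (@gen_sum R f a b lam f_cont a0 f_bound l0 _ _ Mx sx).
- rewrite (_ : \sum_(0 <= n <oo) _ = \sum_(0 <= n <oo)
      (expR (- lam) * lam ^+ n / (n.+1)`!%:R)%:E *
         `| \int[Mf n]_y (f y)%:E |)%E; last first.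
    by congr (limn _); apply/funext => N; apply: eq_bigr => n _; rewrite conv_powE.
  exact: (@gen_sum R f a b lam f_cont a0 f_bound l0 _ _ Mf sf).
Qed.
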